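(* Let $s\in\mathbb N$ and let $\mathbf n\in\mathbb N_0^d$ satisfy $\mathbf n<2^{2m_s+1}\mathbf 1$, $\mathbf n\notin B_{2m_s}$ and $\mathbf n\notin\{0,\dots,2^{m_s}-1\}^d$. Then $\widehat\tau_{\mathbf n}(\Delta^{(m_s)}_{\mathbf l})=0$ for all $\mathbf l<2^{m_s}\mathbf 1$, where $\tau=\tau_F$. The same holds with $\tau$ replaced by $\tau^{\boldsymbol\pi}=\tau_{F^{\boldsymbol\pi}}$ for every sequence $\boldsymbol\pi=(\boldsymbol\pi_s)$ of permutations $\boldsymbol\pi_s$ of $\{0,\dots,2^{m_s}-1\}^d$.
   Context: Fix $d\ge2$. $\mathbb G$ is the dyadic group: sequences $g=(g_k)_{k\ge0}$, $g_k\in\{0,1\}$, coordinatewise addition mod 2, product topology; $\mathbb G^d$ its $d$-th power. For $n\in\mathbb N_0$, $n=\sum_kn_k2^k$, $n_k\in\{0,1\}$. Dyadic interval of rank $k$: $\Delta^{(k)}_m=\{g: g_t=m_{k-1-t},\ 0\le t<k\}$; dyadic cube $\Delta^{(k)}_{\mathbf m}=\prod_l\Delta^{(k)}_{m^l}$. Vector order coordinatewise, $\mathbf 1=(1,\dots,1)$; $B_k=\{\mathbf n\in\mathbb N_0^d: 2^k\mathbf 1\le\mathbf n<2^{k+1}\mathbf 1\}$. Walsh functions $W_n(g)=\prod_k(-1)^{g_kn_k}$, $W_{\mathbf n}(\mathbf g)=\prod_lW_{n^l}(g^l)$; $W^{(k)}_{\mathbf n\mathbf m}$ is the constant value of $W_{\mathbf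 n}$ on $\Delta^{(k)}_{\mathbf m}$ ($\mathbf n,\mathbf m<2^k\mathbf 1$); $R_{k\mathbf 1}:=W_{2^k\mathbf 1}$. Quasimeasure: $\tau$ on dyadic cubes with $\tau(\Delta^{(k)}_{\mathbf m})=\sum_{\boldsymbol\sigma\in\{0,1\}^d}\tau(\Delta^{(k+1)}_{2\mathbf m+\boldsymbol\sigma})$; for a dyadic cube $\Delta$ of rank $r$, $\widehat\tau_{\mathbf n}(\Delta):=\sum_{\Delta^{(k)}_{\mathbf m}\subset\Delta}W^{(k)}_{\mathbf n\mathbf m}\tau(\Delta^{(k)}_{\mathbf m})$ for any $k\ge r$ with $\mathbf n<2^k\mathbf 1$. For nonempty closed $E$, $\tau_E$ is the unique nonnegative quasimeasure with $\tau_E(\mathbb G^d)=1$, $\tau_E(\Delta)=0$ iff $\Delta\cap E=\emptyset$, splitting the value of a cube meeting $E$ equally among its $2^d$ children that meet $E$. Let $m_1=0$, $m_{s+1}=2(2m_s+1)$. $F_s=\bigcup_{\mathbf m,\mathbf m'<2^{m_s}\mathbf 1}\{\mathbf g\in\Delta^{(2m_s)}_{2^{m_s}\mathbf m+\mathbf m'}: R_{2m_s\mathbf 1}(\mathbf g)=W^{(m_s)}_{\mathbf m\mathbf m'}\}$, $F=\bigcap_sF_s$; $F^{\boldsymbol\pi}_s$ is defined likewise with $W^{(m_s)}_{\boldsymbol\pi_s(\mathbf m)\,\mathbf m'}$, and $F^{\boldsymbol\pi}=\bigcap_sF^{\boldsymbol\pi}_s$. *)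

(* Defs.v *)
From mathcomp Require Import all_boot all_order all_algebra.
From mathcomp Require Import fingroup perm.
From mathcomp Require Import boolp.
Set Implicit Arguments. Unset Strict Implicit. Unset Printing Implicit Defensive.
Import Order.TTheory GRing.Theory Num.Theory.
Local Open Scope ring_scope.

(* Points of G^d : g l t = t-th coordinate of the l-th component. *)
Definition pt (d : nat) := 'I_d -> nat -> bool.

Definition bit (t n : nat) : bool := odd (n %/ 2 ^ t).

Definition sgn (b : bool) : rat := if b then -1 else 1.

Definition in_cube d (k : nat) (m : 'I_d -> nat) (g : pt d) : Prop :=
  forall (l : 'I_d) (t : nat), (t < k)%N -> g l t = bit (k.-1 - t) (m l).

(* Walsh function W_n(g) = prod_l prod_t (-1)^{g^l_t n^l_t};
   bits t >= n^l of n^l vanish since n^l < 2^(n^l). *)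
Definition walshW d (n : 'I_d -> nat) (g : pt d) : rat :=
  \prod_(l < d) \prod_(t < n l) sgn (g l t && bit t (n l)).

Definition cube_pt d (k : nat) (m : 'I_d -> nat) : pt d :=
  fun l t => if (t < k)%N then bit (k.-1 - t) (m l) else false.

(* W^(k)_{n m}: the (constant) value of W_n on Delta^(k)_m, for n,m < 2^k 1 *)
Definition Wk d (k : nat) (n m : 'I_d -> nat) : rat := walshW n (cube_pt k m).

Definition Rk d (k : nat) : pt d -> rat := walshW (fun _ : 'I_d => 2 ^ k)%N.

(* m_1 = 0, m_{s+1} = 2(2 m_s + 1); mseq 0 is a dummy value. *)
Fixpoint mseq (s : nat) : nat :=
  match s with
  | 0 => 0
  | 1 => 0
  | S s' => (2 * (2 * mseq s' + 1))%N
  end.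

Definition idx d (K : nat) := {ffun 'I_d -> 'I_(2 ^ K)}.

Definition Fs_gen d (s : nat) (p : idx d (mseq s) -> idx d (mseq s)) (g : pt d) : Prop :=
  exists (m m' : idx d (mseq s)),
    in_cube (2 * mseq s) (fun l => 2 ^ mseq s * m l + m' l)%N g /\
    Rk (2 * mseq s) g = Wk (mseq s) (fun l => p m l : nat) (fun l => m' l : nat).

Definition Fpi d (pi : forall s, {perm idx d (mseq s)}) (g : pt d) : Prop :=
  forall s, (1 <= s)%N -> @Fs_gen d s (pi s) g.

Definition Fset d (g : pt d) : Prop :=
  forall s, (1 <= s)%N -> @Fs_gen d s id g.

Definition meets d (E : pt d -> Prop) (k : nat) (m : 'I_d -> nat) : bool :=
  `[< exists g, E g /\ in_cube k m g >].

(* tau_E: tau_E(G^d) = 1, and the value of a cube is split equally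
   among its 2^d children meeting E (children not meeting E get 0). *)
Fixpoint tauE d (E : pt d -> Prop) (k : nat) (m : 'I_d -> nat) : rat :=
  match k with
  | 0 => 1
  | k'.+1 =>
      if meets E k m then
        tauE E k' (fun l => m l %/ 2)%N /
        (#|[set sig : {ffun 'I_d -> bool} |
              meets E k (fun l => 2 * (m l %/ 2) + sig l)%N]|)%:R
      else 0
  end.

(* hat tau_n(Delta^(r)_l) computed at level k (k >= r, n < 2^k 1):
   sum over subcubes Delta^(k)_m of Delta^(r)_l, i.e. m^i %/ 2^(k-r) = l^i. *)
Definition tauhat d (tau : nat -> ('I_d -> nat) -> rat) (n : 'I_d -> nat)
    (r : nat) (l : 'I_d -> nat) (k : nat) : rat :=
  \sum_(m : idx d k | [forall i, (m i %/ 2 ^ (k - r))%N == l i])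
     Wk k n (fun i => m i : nat) * tau k (fun i => m i : nat).

(* Main.v *)
Require Import Defs.
From mathcomp Require Import all_boot all_order all_algebra.
From mathcomp Require Import fingroup perm.
From mathcomp Require Import boolp.
From mathcomp Require Import zify ring lra.
Set Implicit Arguments. Unset Strict Implicit. Unset Printing Implicit Defensive.
Import Order.TTheory GRing.Theory Num.Theory.
Local Open Scope ring_scope.

Lemma half_join (q : nat) (b : bool) : ((2 * q + b) %/ 2 = q)%N.
Proof. case: b => /=; lia. Qed.

Lemma bit0_join (q : nat) (b : bool) : bit 0 (2 * q + b) = b.
Proof. rewrite /bit expn0 divn1 oddD oddM /=; by case: b. Qed.

Lemma bitS_join t (q : nat) (b : bool) : bit t.+1 (2 * q + b) = bit t q.
Proof. by rewrite /bit expnS divnMA half_join. Qed.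

Lemma bit_small t x : (x < 2 ^ t)%N -> bit t x = false.
Proof. by move=> h; rewrite /bit divn_small. Qed.

Lemma bit_top K x : (2 ^ K <= x < 2 ^ K.+1)%N -> bit K x.
Proof.
move=> /andP[h1 h2]; rewrite /bit.
have -> : (x %/ 2 ^ K = 1)%N.
  apply/eqP; rewrite eqn_leq; apply/andP; split.
    by rewrite -ltnS ltn_divLR ?expn_gt0 // -expnS.
  by rewrite leq_divRL ?expn_gt0 // mul1n.
by [].
Qed.

Lemma bit_pow t K : bit t (2 ^ K) = (t == K).
Proof.
rewrite /bit; case: (ltngtP t K) => h.
- rewrite -(subnK (ltnW h)) expnD mulnK ?expn_gt0 //.
  rewrite -(subnSK h) expnS oddM /=. by [].
- by rewrite divn_small // ltn_exp2l.
- by rewrite h divnn expn_gt0.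
Qed.

Lemma mseqS s : (1 <= s)%N -> mseq s.+1 = (2 * (2 * mseq s + 1))%N.
Proof. by case: s. Qed.

Lemma mseq_lt a b : (1 <= a)%N -> (a < b)%N -> (2 * mseq a < mseq b)%N.
Proof.
move=> ha; elim: b => // b IH; rewrite ltnS leq_eqVlt => /orP[/eqP<-|h].
  rewrite mseqS //; lia.
have hb : (1 <= b)%N by apply: leq_trans ha (ltnW h).
rewrite mseqS //; have := IH h; lia.
Qed.

Lemma mseq_mono a b : (1 <= a)%N -> (a <= b)%N -> (mseq a <= mseq b)%N.
Proof.
move=> ha; rewrite leq_eqVlt => /orP[/eqP->//|h].
have := mseq_lt ha h; lia.
Qed.

Lemma mseq_ge s : (s <= mseq s.+1)%N.
Proof.
elim: s => // s IH; rewrite mseqS //; lia.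
Qed.

Definition flip d (g : pt d) (l0 : 'I_d) (T : nat) : pt d :=
  fun l t => if (l == l0) && (t == T) then ~~ g l t else g l t.

Lemma walshW_eq d (n : 'I_d -> nat) (g g' : pt d) :
  (forall l t, bit t (n l) -> g l t = g' l t) -> walshW n g = walshW n g'.
Proof.
move=> H; apply: eq_bigr => l _; apply: eq_bigr => t _.
case hb: (bit t (n l)); last by rewrite !andbF.
by rewrite H.
Qed.

Lemma walshW_pm d (n : 'I_d -> nat) (g : pt d) : walshW n g = 1 \/ walshW n g = -1.
Proof.
have Hm : forall x y : rat, (x = 1 \/ x = -1) -> (y = 1 \/ y = -1) -> (x * y = 1 \/ x * y = -1).
  move=> x y [->|->] [->|->]; rewrite ?mul1r ?mulN1r ?opprK; by [left|right|left].
apply: (big_ind (fun x : rat => x = 1 \/ x = -1)) => //; first by left.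
move=> l _; apply: (big_ind (fun x : rat => x = 1 \/ x = -1)) => //; first by left.
move=> t _; rewrite /sgn; case: ifP => _; by [right|left].
Qed.

Lemma walshW_flip d (n : 'I_d -> nat) (g : pt d) l0 T :
  walshW n (flip g l0 T) = (if bit T (n l0) then -1 else 1) * walshW n g.
Proof.
rewrite /walshW (bigD1 l0) //= [in RHS](bigD1 l0) //=.
have -> : \prod_(l < d | l != l0) \prod_(t < n l) sgn (flip g l0 T l t && bit t (n l))
   = \prod_(l < d | l != l0) \prod_(t < n l) sgn (g l t && bit t (n l)).
  apply: eq_bigr => l hl; apply: eq_bigr => t _; by rewrite /flip (negbTE hl).
case hb: (bit T (n l0)); last first.
  rewrite mul1r; congr (_ * _); apply: eq_bigr => t _; rewrite /flip eqxx /=.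
  case: eqP => [->|//]; by rewrite hb !andbF.
have hT : (T < n l0)%N.
  rewrite ltnNge; apply/negP => hle.
  have : bit T (n l0) = false by apply: bit_small; apply: leq_ltn_trans hle (ltn_expl _ _).
  by rewrite hb.
rewrite (bigD1 (Ordinal hT)) //= [in RHS](bigD1 (Ordinal hT)) //=.
rewrite {1}/flip eqxx /= eqxx hb !andbT.
rewrite (eq_bigr (fun i : 'I_(n l0) => sgn (g l0 i && bit i (n l0)))); last first.
  move=> t ht; rewrite /flip eqxx /=.
  case: eqP => // et; exfalso; move/eqP: ht; apply; exact: val_inj.
have -> : sgn (~~ g l0 T) = - sgn (g l0 T) by rewrite /sgn; case: (g l0 T); rewrite ?opprK.
ring.
Qed.

Lemma cube_pt_join d k (q : 'I_d -> nat) (sg : 'I_d -> bool) l t :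
  cube_pt k.+1 (fun l => 2 * q l + sg l)%N l t =
  if (t < k)%N then cube_pt k q l t else (t == k) && sg l.
Proof.
rewrite /cube_pt; case: (ltngtP t k) => h.
- rewrite ltnS (ltnW h) /=.
  have -> : (k - t = (k.-1 - t).+1)%N by lia.
  by rewrite bitS_join.
- by rewrite ltnS leqNgt h.
- by rewrite h ltnSn /= subnn bit0_join.
Qed.

Fixpoint enc (k : nat) (f : nat -> bool) : nat :=
  if k is k'.+1 then (2 * enc k' f + f k')%N else 0%N.

Lemma enc_lt k f : (enc k f < 2 ^ k)%N.
Proof. elim: k => //= k IH; rewrite expnS; case: (f k) => /=; lia. Qed.

Lemma enc_cube d k (g : pt d) : in_cube k (fun l => enc k (g l)) g.
Proof.
elim: k => [l t //|k IH l t ht] /=.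
case: (ltngtP t k) => h.
- have -> : (k - t = (k.-1 - t).+1)%N by lia.
  by rewrite bitS_join; apply: IH.
- by move: ht; rewrite ltnS leqNgt h.
- by rewrite h subnn bit0_join.
Qed.

Definition join d (q : 'I_d -> nat) (sg : 'I_d -> bool) : 'I_d -> nat :=
  fun l => (2 * q l + sg l)%N.

Lemma meets_child d (E : pt d -> Prop) k (q : 'I_d -> nat) :
  meets E k q -> exists sg : {ffun 'I_d -> bool}, meets E k.+1 (join q sg).
Proof.
move/asboolP => [g [Eg Hc]]; exists [ffun l => g l k]; apply/asboolP.
exists g; split => // l t ht; rewrite /join ffunE.
case: (ltngtP t k) => h.
- have -> : (k.+1.-1 - t = (k.-1 - t).+1)%N by lia.
  by rewrite bitS_join; apply: Hc.
- by move: ht; rewrite ltnS leqNgt h.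
- by rewrite h /= subnn bit0_join.
Qed.

Definition Aset d (E : pt d -> Prop) k (q : 'I_d -> nat) :=
  [set sg : {ffun 'I_d -> bool} | meets E k.+1 (join q sg)].

Lemma tauE_join d (E : pt d -> Prop) k (q : 'I_d -> nat) (sg : 'I_d -> bool) :
  tauE E k.+1 (join q sg) =
  if meets E k.+1 (join q sg) then tauE E k q / (#|Aset E k q|)%:R else 0.
Proof.
rewrite [LHS]/=.
have hq : (fun l => join q sg l %/ 2)%N = q by apply: funext => l; rewrite /join half_join.
have hA : [set sig : {ffun 'I_d -> bool} |
              meets E k.+1 (fun l => 2 * (join q sg l %/ 2) + sig l)%N] = Aset E k q.
  apply/setP => x; rewrite !inE; congr meets; apply: funext => l.
  by rewrite /join half_join.
by rewrite hq hA.
Qed.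

Lemma sum_children d (E : pt d -> Prop) k (q : 'I_d -> nat) : (1 <= k)%N ->
  \sum_(sg : {ffun 'I_d -> bool}) tauE E k.+1 (join q sg) = tauE E k q.
Proof.
move=> hk.
rewrite (eq_bigr (fun sg => if sg \in Aset E k q then tauE E k q / (#|Aset E k q|)%:R else 0));
  last by move=> sg _; rewrite tauE_join inE.
rewrite -big_mkcond /= sumr_const.
case hN: (#|Aset E k q| == 0)%N.
  move/eqP: hN => hN; rewrite hN mulr0n.
  case: k hk hN => // k _ hN /=.
  case hm: (meets E k.+1 q) => //.
  have [sg hs] := meets_child hm.
  move/card0_eq: hN => /(_ sg); by rewrite inE hs.
set N := #|Aset E k q|; set c := tauE E k q.
by rewrite -(mulr_natr (c / N%:R)) divfK // pnatr_eq0 hN.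
Qed.

Lemma join_lt k (q : 'I_(2 ^ k)) (b : bool) : (2 * q + b < 2 ^ k.+1)%N.
Proof. have := ltn_ord q; move: (nat_of_ord q) => y; rewrite expnS; case: b => /=; lia. Qed.

Lemma half_lt k (x : 'I_(2 ^ k.+1)) : (x %/ 2 < 2 ^ k)%N.
Proof. have := ltn_ord x; move: (nat_of_ord x) => y; rewrite expnS; lia. Qed.

Definition Jf d k (x : idx d k * {ffun 'I_d -> bool}) : idx d k.+1 :=
  [ffun i => Ordinal (join_lt (x.1 i) (x.2 i))].
Definition Jinv d k (m : idx d k.+1) : idx d k * {ffun 'I_d -> bool} :=
  ([ffun i => Ordinal (half_lt (m i))], [ffun i => odd (m i)]).

Lemma J_bij d k : bijective (@Jf d k).
Proof.
exists (@Jinv d k).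
- move=> [q sg]; rewrite /Jf /Jinv; congr pair; apply/ffunP => i; rewrite !ffunE.
    by apply: val_inj => /=; rewrite half_join.
  by rewrite /= oddD oddM /=; case: (sg i).
- move=> m; apply/ffunP => i; rewrite !ffunE; apply: val_inj => /=.
  lia.
Qed.

Lemma decomp d r (l : 'I_d -> nat) k (F : ('I_d -> nat) -> rat) : (r <= k)%N ->
  \sum_(m : idx d k.+1 | [forall i, (m i %/ 2 ^ (k.+1 - r))%N == l i]) F (fun i => m i : nat) =
  \sum_(q : idx d k | [forall i, (q i %/ 2 ^ (k - r))%N == l i])
     \sum_(sg : {ffun 'I_d -> bool}) F (join (fun i => q i : nat) sg).
Proof.
move=> hr; rewrite (reindex (@Jf d k)) /=; last exact: onW_bij (J_bij d k).
rewrite pair_big_dep /=; apply: eq_big => [[q sg]|[q sg] _] /=.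
- rewrite andbT; apply: eq_forallb => i; rewrite ffunE /= subSn // expnS divnMA half_join.
  by [].
- by congr F; apply: funext => i; rewrite ffunE.
Qed.

Lemma red d (E : pt d -> Prop) n r l k : (r <= k)%N -> (1 <= k)%N ->
  (forall i, n i < 2 ^ k)%N ->
  tauhat (tauE E) n r l k.+1 = tauhat (tauE E) n r l k.
Proof.
move=> hr hk hn; rewrite /tauhat (decomp l (fun f => Wk k.+1 n f * tauE E k.+1 f)) //.
apply: eq_bigr => q _.
rewrite -(sum_children E (fun i => q i : nat) hk) mulr_sumr; apply: eq_bigr => sg _.
congr (_ * _); rewrite /Wk; apply: walshW_eq => i t hb.
rewrite /join cube_pt_join.
suff -> : (t < k)%N by [].
rewrite ltnNge; apply/negP => hkt.
have : bit t (n i) = false.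
  by apply: bit_small; apply: leq_trans (hn i) _; rewrite leq_exp2l.
by rewrite hb.
Qed.

Lemma zero_parent d (E : pt d -> Prop) n k (q : 'I_d -> nat)
  (iota : {ffun 'I_d -> bool} -> {ffun 'I_d -> bool}) :
  involutive iota ->
  (forall sg, meets E k.+1 (join q (iota sg)) = meets E k.+1 (join q sg)) ->
  (forall sg, Wk k.+1 n (join q (iota sg)) = - Wk k.+1 n (join q sg)) ->
  \sum_(sg : {ffun 'I_d -> bool}) Wk k.+1 n (join q sg) * tauE E k.+1 (join q sg) = 0.
Proof.
move=> hinv hm hW.
set S := (X in X = 0).
have : S = - S.
  rewrite {1}/S (reindex_inj (inv_inj hinv)) -sumrN; apply: eq_bigr => sg _.
  by rewrite hW !tauE_join hm mulNr.
move=> h; lra.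
Qed.

Definition Ep d (p : forall s, idx d (mseq s) -> idx d (mseq s)) : pt d -> Prop :=
  fun g => forall s, (1 <= s)%N -> @Fs_gen d s (p s) g.

Lemma Fs_agree d s (P : idx d (mseq s) -> idx d (mseq s)) (g g' : pt d) :
  (forall l t, (t <= 2 * mseq s)%N -> g' l t = g l t) -> @Fs_gen d s P g -> @Fs_gen d s P g'.
Proof.
move=> H [m [m' [Hc HR]]]; exists m, m'; split.
- move=> l t ht; rewrite H ?(ltnW ht) //; exact: Hc.
- rewrite -HR /Rk; apply: walshW_eq => l t; rewrite bit_pow => /eqP ->.
  exact: H.
Qed.

Lemma Fs_flip2 d s (P : idx d (mseq s) -> idx d (mseq s)) (g : pt d) i j :
  i != j -> @Fs_gen d s P g -> @Fs_gen d s P (flip (flip g i (2 * mseq s)) j (2 * mseq s)).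
Proof.
move=> hij [m [m' [Hc HR]]]; exists m, m'; split.
- move=> l t ht; rewrite /flip (ltn_eqF ht) !andbF; exact: Hc.
- rewrite -HR /Rk !walshW_flip /= bit_pow eqxx; ring.
Qed.

Definition upd d (h : pt d) (l0 : 'I_d) (T : nat) (b : bool) : pt d :=
  fun l t => if (l == l0) && (t == T) then b else h l t.

Definition fixs d (p : forall s, idx d (mseq s) -> idx d (mseq s)) (i0 : 'I_d) s (h : pt d) : pt d :=
  upd h i0 (2 * mseq s) `[< @Fs_gen d s (p s) (upd h i0 (2 * mseq s) true) >].

Lemma fixs_ok d p (i0 : 'I_d) s h : @Fs_gen d s (p s) (fixs p i0 s h).
Proof.
rewrite /fixs; case: asboolP => // hn.
set T := (2 * mseq s)%N; set M := mseq s.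
pose e := fun l => enc T (h l).
have he : forall l, (e l < 2 ^ M * 2 ^ M)%N.
  by move=> l; rewrite -expnD addnn -mul2n; apply: enc_lt.
have ha : forall l, (e l %/ 2 ^ M < 2 ^ M)%N.
  by move=> l; rewrite ltn_divLR ?expn_gt0.
have hb : forall l, (e l %% 2 ^ M < 2 ^ M)%N.
  by move=> l; rewrite ltn_pmod ?expn_gt0.
pose a : idx d M := [ffun l => Ordinal (ha l)].
pose b : idx d M := [ffun l => Ordinal (hb l)].
have Hc : forall b0, in_cube T (fun l => 2 ^ M * a l + b l)%N (upd h i0 T b0).
  move=> b0 l t ht; rewrite !ffunE /= mulnC -divn_eq /upd (ltn_eqF ht) andbF.
  exact: enc_cube.
have HR : Rk T (upd h i0 T true) != Wk M (fun l => p s a l : nat) (fun l => b l : nat).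
  apply/eqP => HR; apply: hn; exists a, b; split; [exact: Hc | exact: HR].
exists a, b; split; first exact: Hc.
have -> : upd h i0 T false = flip (upd h i0 T true) i0 T.
  apply: funext => l; apply: funext => t; rewrite /upd /flip; by case: ifP.
move: HR; rewrite /Rk walshW_flip /= bit_pow eqxx /Wk.
case: (walshW_pm (fun _ : 'I_d => 2 ^ T)%N (upd h i0 T true)) => ->;
case: (walshW_pm (fun l => p s a l : nat) (cube_pt M (fun l => b l : nat))) => -> H;
  try lra; by rewrite eqxx in H.
Qed.

Fixpoint G d p (i0 : 'I_d) j (h0 : pt d) (a : nat) : pt d :=
  match a with
  | 0 => h0
  | a'.+1 => let h := G p i0 j h0 a' in
             if (j <= 2 * mseq a'.+1)%N then fixs p i0 a'.+1 h else h
  end.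

Lemma G_low d p (i0 : 'I_d) j h0 a l t : (t < j)%N -> G p i0 j h0 a l t = h0 l t.
Proof.
move=> ht; elim: a => //= a IH; case: ifP => // hj.
rewrite /fixs /upd; case: ifP => [/andP[_ /eqP et]|_ //].
by move: ht; rewrite et ltnNge hj.
Qed.

Lemma G_stable d p (i0 : 'I_d) j h0 a b : (a <= b)%N ->
  forall l t, (t < 2 * mseq a.+1)%N -> G p i0 j h0 b l t = G p i0 j h0 a l t.
Proof.
move=> hab l t ht; elim: b hab => [|b IH]; first by rewrite leqn0 => /eqP->.
rewrite leq_eqVlt => /orP[/eqP->//|]; rewrite ltnS => hab /=.
case: ifP => _; last exact: IH.
rewrite /fixs /upd; case: ifP => [/andP[_ /eqP et]|_]; last exact: IH.
have := mseq_mono (ltn0Sn a) (hab : (a.+1 <= b.+1)%N).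
move: ht; rewrite et; lia.
Qed.

Lemma G_sat d p (i0 : 'I_d) j h0 s : (1 <= s)%N -> (j <= 2 * mseq s)%N ->
  @Fs_gen d s (p s) (G p i0 j h0 s).
Proof. case: s => // s _ hj /=; rewrite hj; exact: fixs_ok. Qed.

Definition valid d (p : forall s, idx d (mseq s) -> idx d (mseq s)) j (m : 'I_d -> nat) :=
  forall s, (1 <= s)%N -> (2 * mseq s < j)%N -> @Fs_gen d s (p s) (cube_pt j m).

Lemma meets_char d p (i0 : 'I_d) j (m : 'I_d -> nat) :
  meets (Ep p) j m <-> valid p j m.
Proof.
split.
  move/asboolP => [g [Eg Hc]] s hs hsj; apply: (Fs_agree _ (Eg s hs)) => l t ht.
  rewrite /cube_pt (leq_ltn_trans ht hsj); symmetry; apply: Hc.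
  exact: leq_ltn_trans ht hsj.
move=> V; apply/asboolP.
pose h0 := cube_pt j m.
exists (fun l t => G p i0 j h0 t.+1 l t); split.
- move=> s hs; case: (ltnP (2 * mseq s) j) => hsj.
    apply: (Fs_agree _ (V s hs hsj)) => l t ht.
    by apply: G_low; apply: leq_ltn_trans ht hsj.
  apply: (Fs_agree _ (@G_sat d p i0 j h0 s hs hsj)) => l t ht.
  case: (leqP t.+1 s) => h.
    symmetry; apply: G_stable => //; have := mseq_ge t.+1; lia.
  apply: G_stable; first exact: ltnW.
  have := mseq_lt hs (ltnSn s); lia.
- move=> l t ht; rewrite G_low // /h0 /cube_pt ht //.
Qed.

Lemma two_mseq_neq s s' K : (1 <= s)%N -> (1 <= s')%N -> (mseq s <= K)%N ->
  (K < 2 * mseq s)%N -> (2 * mseq s' != K)%N.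
Proof.
move=> hs hs' h1 h2; case: (ltnP s' s) => h.
  have := mseq_lt hs' h; lia.
have := mseq_mono hs h; lia.
Qed.

Theorem gen d (i0 : 'I_d) (p : forall s, idx d (mseq s) -> idx d (mseq s)) s n l k :
  (1 <= s)%N ->
  (forall i, n i < 2 ^ (2 * mseq s).+1)%N ->
  ~ (forall i, (2 ^ (2 * mseq s) <= n i < 2 ^ (2 * mseq s).+1)%N) ->
  ~ (forall i, (n i < 2 ^ mseq s)%N) ->
  (mseq s <= k)%N -> (forall i, (n i < 2 ^ k)%N) ->
  tauhat (tauE (Ep p)) n (mseq s) l k = 0.
Proof.
move=> hs hn1 hn2 hn3 hk hnk.
set M := mseq s in hn1 hn2 hn3 hk *.
have [K [hMK hK2 hnK [i hi]]] : exists K, [/\ (M <= K)%N, (K <= 2 * M)%N,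
    (forall i, n i < 2 ^ K.+1)%N & exists i, bit K (n i)].
  have exP : exists x, [forall i, (n i < 2 ^ x)%N] by exists k; apply/forallP.
  case: (ex_minnP exP) => k0 /forallP Pk0 mink0.
  have h2 : (k0 <= (2 * M).+1)%N by apply: mink0; apply/forallP.
  case: k0 Pk0 mink0 h2 => [|K] Pk0 mink0 h2.
    exfalso; apply: hn3 => i; apply: leq_trans (Pk0 i) _; by rewrite expn0 expn_gt0.
  have hMK : (M <= K)%N.
    rewrite leqNgt; apply/negP => hKM; apply: hn3 => i; apply: leq_trans (Pk0 i) _.
    by rewrite leq_exp2l.
  have : ~~ [forall i, (n i < 2 ^ K)%N].
    by apply/negP => hP; have := mink0 _ hP; rewrite ltnn.
  rewrite negb_forall => /existsP [i hi].
  exists K; split => //; exists i; apply: bit_top; by rewrite Pk0 andbT leqNgt.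
have hKk : (K < k)%N.
  have h : (2 ^ K <= n i)%N.
    by rewrite leqNgt; apply/negP => h; rewrite bit_small in hi.
  by have := leq_ltn_trans h (hnk i); rewrite ltn_exp2l.
have Hred : forall j, tauhat (tauE (Ep p)) n M l (K.+1 + j) = tauhat (tauE (Ep p)) n M l K.+1.
  elim=> [|j IH]; first by rewrite addn0.
  rewrite addnS red //; first lia.
  move=> i'; apply: leq_trans (hnK i') _; rewrite leq_exp2l //; lia.
rewrite -(subnKC hKk) Hred.
rewrite /tauhat (decomp l (fun f => Wk K.+1 n f * tauE (Ep p) K.+1 f)) //.
apply: big1 => q _.
set qq := (fun i => q i : nat).
case: (ltnP K (2 * M)) => hK.
- pose iota := fun sg : {ffun 'I_d -> bool} => [ffun l => if l == i then ~~ sg l else sg l].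
  have hinv : involutive iota.
    move=> sg; apply/ffunP => l'; rewrite !ffunE; case: eqP => //; by rewrite negbK.
  have hc : forall sg, cube_pt K.+1 (join qq (iota sg)) = flip (cube_pt K.+1 (join qq sg)) i K.
    move=> sg; apply: funext => l'; apply: funext => t; rewrite /flip /join !cube_pt_join ffunE.
    case: ifP => ht; first by rewrite (ltn_eqF ht) andbF.
    by case: (l' == i); case: (t == K).
  have hflip : forall sg : {ffun 'I_d -> bool}, valid p K.+1 (join qq sg) -> valid p K.+1 (join qq (iota sg)).
    move=> sg V s' hs' hsj; rewrite hc; apply: (Fs_agree _ (V s' hs' hsj)) => l' t ht.
    have /eqP hne := two_mseq_neq hs hs' hMK hK.
    have htK : (t == K) = false by apply/eqP; lia.
    by rewrite /flip htK andbF.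
  apply: (zero_parent hinv).
  + move=> sg; apply/idP/idP => H.
      rewrite -[sg]hinv; apply/(meets_char p i0); apply: hflip; exact/(meets_char p i0).
    apply/(meets_char p i0); apply: hflip; exact/(meets_char p i0).
  + move=> sg; rewrite /Wk hc walshW_flip hi /=; ring.
- have eK : K = (2 * M)%N by apply/eqP; rewrite eqn_leq hK2 hK.
  have [j hj] : exists j, bit K (n j) = false.
    have : ~~ [forall i, (2 ^ (2 * M) <= n i < 2 ^ (2 * M).+1)%N] by apply/negP => /forallP.
    rewrite negb_forall => /existsP [j hj]; exists j; apply: bit_small.
    by rewrite eK; move: hj; rewrite (hn1 j) andbT -ltnNge.
  have hij : i != j by apply/eqP => e; rewrite e hj in hi.
  pose iota := fun sg : {ffun 'I_d -> bool} =>
    [ffun l => if (l == i) || (l == j) then ~~ sg l else sg l].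
  have hinv : involutive iota.
    move=> sg; apply/ffunP => l'; rewrite !ffunE.
    by case: ((l' == i) || (l' == j)); rewrite /= ?negbK.
  have hc : forall sg, cube_pt K.+1 (join qq (iota sg)) =
      flip (flip (cube_pt K.+1 (join qq sg)) i K) j K.
    move=> sg; apply: funext => l'; apply: funext => t; rewrite /flip /join !cube_pt_join ffunE.
    case: ifP => ht; first by rewrite (ltn_eqF ht) !andbF.
    case: (eqVneq l' i) => [->|ne1].
      by rewrite ?eqxx ?(negbTE hij) /=; case: (t == K).
    by rewrite ?(negbTE ne1) /=; case: (l' == j); case: (t == K).
  have hflip : forall sg : {ffun 'I_d -> bool}, valid p K.+1 (join qq sg) -> valid p K.+1 (join qq (iota sg)).
    move=> sg V s' hs' hsj; rewrite hc.
    case: (ltngtP (2 * mseq s') K) => h.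
    * apply: (Fs_agree _ (V s' hs' hsj)) => l' t ht.
      have htK : (t == K) = false by apply/eqP; lia.
      by rewrite /flip htK !andbF.
    * by move: hsj; rewrite ltnS leqNgt h.
    * have HV := V s' hs' hsj; rewrite -h in HV *; exact: Fs_flip2.
  apply: (zero_parent hinv).
  + move=> sg; apply/idP/idP => H.
      rewrite -[sg]hinv; apply/(meets_char p i0); apply: hflip; exact/(meets_char p i0).
    apply/(meets_char p i0); apply: hflip; exact/(meets_char p i0).
  + move=> sg; rewrite /Wk hc !walshW_flip hi hj /=; ring.
Qed.

Theorem lemma4 (d : nat) (hd : (2 <= d)%N) (s : nat) (hs : (1 <= s)%N)
  (n : 'I_d -> nat)
  (hn1 : forall i, (n i < 2 ^ (2 * mseq s).+1)%N)
  (hn2 : ~ (forall i, (2 ^ (2 * mseq s) <= n i < 2 ^ (2 * mseq s).+1)%N))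
  (hn3 : ~ (forall i, (n i < 2 ^ mseq s)%N)) :
  (forall l : 'I_d -> nat, (forall i, (l i < 2 ^ mseq s)%N) ->
     forall k, (mseq s <= k)%N -> (forall i, (n i < 2 ^ k)%N) ->
     tauhat (tauE (@Fset d)) n (mseq s) l k = 0) /\
  (forall pi : forall s', {perm idx d (mseq s')},
   forall l : 'I_d -> nat, (forall i, (l i < 2 ^ mseq s)%N) ->
     forall k, (mseq s <= k)%N -> (forall i, (n i < 2 ^ k)%N) ->
     tauhat (tauE (Fpi pi)) n (mseq s) l k = 0).
Proof.
have i0 : 'I_d := Ordinal (ltnW hd).
split.
- move=> l _ k hk hnk.
  exact: (@gen d i0 (fun s' => @id (idx d (mseq s'))) s n l k hs hn1 hn2 hn3 hk hnk).
- move=> pi l _ k hk hnk.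
  exact: (@gen d i0 (fun s' => fun x => pi s' x) s n l k hs hn1 hn2 hn3 hk hnk).
Qed.
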